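(* Let $K,F,Z,S$ be positive integers and let $\mathbf{P}=(p_{j,k})_{0\le j<F,\,0\le k<K}$ be a $(K,F,Z,S)$ placement delivery array. Suppose there is an integer $Z'$ such that every column of $\mathbf{P}$ contains exactly $Z'$ useless stars. Then, for any number $N$ of files, there exists an $(F-Z')$-division $(K,M,N)$ coded caching scheme with memory ratio $\frac{M}{N}=\frac{Z-Z'}{F-Z'}$ and transmission rate $R=\frac{S}{F-Z'}$. Moreover, its delivery consists of $S$ transmissions indexed by $s\in[0,S)$, each of the size of one packet, and the coded gain at each time slot $s$ is the same as in the scheme obtained from $\mathbf{P}$ by the standard PDA scheme; that is, transmission $s$ is the XOR of coded packets each of which is needed by a different user, and it simultaneously serves exactly as many users as the number of occurrences of the integer $s$ in $\mathbf{P}$.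
   Context: Notation: $[0,m)=\{0,1,\dots,m-1\}$. Placement delivery array (PDA): for positive integers $K,F,Z,S$, an $F\times K$ array $\mathbf{P}=(p_{j,k})$, $0\le j<F$, $0\le k<K$, whose entries are either a special symbol $*$ or integers in $[0,S)$, is a $(K,F,Z,S)$ PDA if (C1) the symbol $*$ appears exactly $Z$ times in each column; (C2) each integer in $[0,S)$ occurs at least once in the array; (C3) for any two distinct entries $p_{j_1,k_1}$ and $p_{j_2,k_2}$, $p_{j_1,k_1}=p_{j_2,k_2}=s$ with $s$ an integer only if $j_1\ne j_2$, $k_1\ne k_2$ and $p_{j_1,k_2}=p_{j_2,k_1}=*$. Useful/useless stars: a star entry $p_{j,k}=*$ is useful if there exist an integer $s\in[0,S)$, a column $k'$ with $p_{j,k'}=s$ and a row $j'$ with $p_{j',k}=s$ (i.e. the star lies in the square subarray formed by the rows and columns of the occurrences of $s$); otherwise it is useless. Standard PDA scheme: each file is split into $F$ packets $W_{n,j}$, $j\in[0,F)$; user $k$ caches $W_{n,j}$ for all $n$ and all $j$ with $p_{j,k}=*$; for demand vector $\mathbf{d}$, at time slot $s\in[0,S)$ the server sends $\bigoplus_{p_{j,k}=s}W_{d_k,j}$. The number of occurrences of $s$ in $\mathbf{P}$ is called the coded gain at time slot $s$. Coded caching model: a server holds $N$ files $W_0,\dots,W_{N-1}$ of equal size, connected by a shared error-free broadcast link to $K$ users, each with a cache of size $M$ files. An $F$-division $(K,M,N)$ coded caching scheme consists of: (placement) each file is split into $F$ equal-size packets and each user $k$ stores content $\mathcal{Z}_k$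 (packets or coded combinations of packets, possibly over a finite field) of total size at most $M$ files, without knowledge of the demands; (delivery) for each demand vector $\mathbf{d}=(d_0,\dots,d_{K-1})\in[0,N)^K$ (user $k$ requests $W_{d_k}$), the server broadcasts a signal of size $R_{\mathbf{d}}$ files such that every user $k$ can recover $W_{d_k}$ from the signal and $\mathcal{Z}_k$. The memory ratio is $M/N$ and the transmission rate is $R=\max_{\mathbf{d}}R_{\mathbf{d}}$. *)

(* Defs.v *)
From HB Require Import structures.
From mathcomp Require Import all_boot all_order all_algebra.
Set Implicit Arguments. Unset Strict Implicit. Unset Printing Implicit Defensive.
Import GRing.Theory Num.Theory.

(* A K x F array P with entries in {*} U [0,S): entry p_{j,k} is [P j k],
   where [None] stands for the star symbol and [Some s] for the integer s. *)
Definition pda_array (K F S : nat) := 'I_F -> 'I_K -> option 'I_S.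

Definition is_PDA (K F Z S : nat) (P : pda_array K F S) : Prop :=
  (forall k : 'I_K, #|[set j : 'I_F | P j k == None]| = Z) /\
  (forall s : 'I_S, exists (j : 'I_F) (k : 'I_K), P j k = Some s) /\
  (forall (j1 j2 : 'I_F) (k1 k2 : 'I_K) (s : 'I_S),
              (j1, k1) != (j2, k2) -> P j1 k1 = Some s -> P j2 k2 = Some s ->
              [/\ j1 != j2, k1 != k2, P j1 k2 = None & P j2 k1 = None]).

Definition useful_star (K F S : nat) (P : pda_array K F S) (j : 'I_F) (k : 'I_K) : bool :=
  (P j k == None) &&
  [exists s : 'I_S, exists k' : 'I_K, exists j' : 'I_F,
      (P j k' == Some s) && (P j' k == Some s)].

Definition useless_star (K F S : nat) (P : pda_array K F S) (j : 'I_F) (k : 'I_K) : bool :=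
  (P j k == None) && ~~ useful_star P j k.

(* An Fp-division scheme for N files: each file is a vector of Fp packets,
   so the library is  W : 'I_N -> 'I_Fp -> A.
   Placement: user k stores  cache k W : 'I_C -> A  (C packet-sized symbols,
   arbitrary -- possibly coded -- functions of the whole library, independent
   of the demands); its memory is M = C / Fp files.
   Delivery: for demand d : 'I_K -> 'I_N the server broadcasts
   deliver d W : 'I_T -> A, i.e. T transmissions of one packet each, so that
   R_d = T / Fp for every d. *)
Definition files (A : Type) (N Fp : nat) := 'I_N -> 'I_Fp -> A.

Definition coded_caching_scheme (A : Type) (K N Fp C T : nat)
  (cache : 'I_K -> files A N Fp -> 'I_C -> A)
  (deliver : ('I_K -> 'I_N) -> files A N Fp -> 'I_T -> A) : Prop :=
  forall (d : 'I_K -> 'I_N) (k : 'I_K),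
    exists dec : ('I_C -> A) -> ('I_T -> A) -> 'I_Fp -> A,
      forall (W : files A N Fp) (i : 'I_Fp), dec (cache k W) (deliver d W) i = W (d k) i.

Definition memory_ratio (N Fp C : nat) : rat := (C%:R / Fp%:R) / N%:R.
Definition trans_rate (Fp T : nat) : rat := T%:R / Fp%:R.

(* Main.v *)
Require Import Defs.
From HB Require Import structures.
From mathcomp Require Import all_boot all_order all_algebra.
From Stdlib Require Import ClassicalEpsilon FunctionalExtensionality.
Import GRing.Theory Num.Theory.
Set Implicit Arguments. Unset Strict Implicit.

Lemma factor_ex (X Y Z I : Type) (z0 : Z) (f : X -> Y) (g : X -> I -> Z) :
  (forall x x', f x = f x' -> forall i, g x i = g x' i) ->
  exists h : Y -> I -> Z, forall x i, h (f x) i = g x i.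
Proof.
move=> H.
exists (fun y i => epsilon (inhabits z0) (fun z => exists x, f x = y /\ g x i = z)).
move=> x i.
have [x' [e1 e2]] := epsilon_spec (inhabits z0) (fun z => exists x', f x' = f x /\ g x' i = z)
  (ex_intro _ (g x i) (ex_intro _ x (conj erefl erefl))).
by rewrite -e2; apply: H.
Qed.

Section Ev.
Local Open Scope ring_scope.
Variables (A : fieldType) (F n : nat) (a : 'I_F -> A).
Hypothesis ainj : injective a.

Definition ev (j : 'I_F) (w : 'I_n -> A) : A := \sum_(i < n) w i * a j ^+ i.

Lemma ev_inj (X : {set 'I_F}) : #|X| = n -> forall w w' : 'I_n -> A,
  (forall j, j \in X -> ev j w = ev j w') -> forall i, w i = w' i.
Proof.
move=> cX w w' H i.
pose p : {poly A} := \poly_(k < n) (w (insubd i k) - w' (insubd i k)).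
have pr : forall j, j \in X -> root p (a j).
  move=> j jX; rewrite /root horner_poly /p.
  have := H j jX; rewrite /ev => e.
  rewrite (eq_bigr (fun i => w i * a j ^+ i - w' i * a j ^+ i)).
    by rewrite sumrB e subrr.
  by move=> k _; rewrite valKd mulrBl.
have p0 : p = 0.
  apply/eqP; apply/negPn/negP => pn0.
  have := max_poly_roots pn0 (rs := [seq a j | j <- enum X]).
  rewrite size_map -cardE cX.
  have : (size p <= n)%N by apply: size_poly.
  move=> sp hh.
  have : (n < size p)%N.
    apply: hh.
      by apply/allP => x /mapP [j]; rewrite mem_enum => jX ->; apply: pr.
    by rewrite map_inj_uniq ?enum_uniq.
  by rewrite ltnNge sp.
have := congr1 (fun q : {poly A} => q`_i) p0.
rewrite coef_poly ltn_ord coef0 valKd => /eqP.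
by rewrite subr_eq0 => /eqP.
Qed.

Lemma ev_sep (Y : {set 'I_F}) j : j \notin Y -> (#|Y| < n)%N ->
  exists w : 'I_n -> A, (forall y, y \in Y -> ev y w = 0) /\ ev j w != 0.
Proof.
move=> jY cY.
pose q : {poly A} := \prod_(x <- [seq a y | y <- enum Y]) ('X - x%:P).
have sq : (size q <= n)%N by rewrite size_prod_XsubC size_map -cardE.
exists (fun i => q`_i).
have evq : forall j, ev j (fun i => q`_i) = q.[a j].
  by move=> j'; rewrite (horner_coef_wide _ sq).
split.
  move=> y yY; rewrite evq; apply/eqP.
  rewrite -/(root q (a y)) root_prod_XsubC; apply/mapP; exists y => //.
  by rewrite mem_enum.
rewrite evq; apply/negP; rewrite -/(root q (a j)) root_prod_XsubC.
by case/mapP => y; rewrite mem_enum => yY /ainj ey; move: jY; rewrite ey yY.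
Qed.
End Ev.

Unset Implicit Arguments.

Theorem theorem2 (K F Z S : nat) (P : pda_array K F S) (Z' N : nat) :
  0 < K -> 0 < F -> 0 < Z -> 0 < S ->
  is_PDA Z P ->
  (forall k : 'I_K, #|[set j : 'I_F | useless_star P j k]| = Z') ->
  0 < N ->
  exists (A : finFieldType) (C : nat)
         (cache : 'I_K -> files A N (F - Z') -> 'I_C -> A)
         (deliver : ('I_K -> 'I_N) -> files A N (F - Z') -> 'I_S -> A)
         (c : 'I_F -> ('I_(F - Z') -> A) -> A),
    [/\ coded_caching_scheme cache deliver,
        memory_ratio N (F - Z') C = ((Z - Z')%N%:R / (F - Z')%N%:R)%R,
        trans_rate (F - Z') S = (S%:R / (F - Z')%N%:R)%R,
        (forall (d : 'I_K -> 'I_N) (W : files A N (F - Z')) (s : 'I_S),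
            deliver d W s =
            (\sum_(jk : 'I_F * 'I_K | P jk.1 jk.2 == Some s) c jk.1 (W (d jk.2)))%R)
      & (forall (d : 'I_K -> 'I_N) (j : 'I_F) (k : 'I_K) (s : 'I_S),
            P j k = Some s ->
            (exists g : ('I_C -> A) -> A -> A,
                forall W : files A N (F - Z'), g (cache k W) (deliver d W s) = c j (W (d k)))
            /\ ~ (exists h : ('I_C -> A) -> A,
                forall W : files A N (F - Z'), h (cache k W) = c j (W (d k))))].
Proof.
move=> HK HF HZ HS [C1 [C2 C3]] HZ' HN.
have [p Fp pr] := prime_above F.
pose a : 'I_F -> 'F_p := fun j => ((val j)%:R)%R.
have ainj : injective a.
  move=> x y; rewrite /a => /(congr1 val) /=; rewrite !val_Fp_nat //.
  rewrite !modn_small => [/val_inj //||]; exact: ltn_trans (ltn_ord _) Fp.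
pose U k := [set j | useful_star P j k].
pose m := Z - Z'.
have hU : forall k, #|U k| = m.
  move=> k; rewrite /m -(C1 k) -(HZ' k).
  rewrite -(cardsID (U k) [set j | P j k == None]).
  have -> : [set j | P j k == None] :&: U k = U k.
    apply/setP => j; rewrite !inE /useful_star; by case: (P j k == None).
  have -> : [set j | P j k == None] :\: U k = [set j | useless_star P j k].
    apply/setP => j; rewrite !inE /useless_star andbC //.
  by rewrite addnK.
have hR : forall k, #|[set j | ~~ useless_star P j k]| = F - Z'.
  move=> k; have := cardsC [set j | useless_star P j k].
  rewrite card_ord HZ'.
  have -> : ~: [set j | useless_star P j k] = [set j | ~~ useless_star P j k].
    by apply/setP => j; rewrite !inE.
  by move=> e; rewrite -[in RHS]e addKn.
have hZZ' : Z' <= Z.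
  rewrite -(C1 (Ordinal HK)) -(HZ' (Ordinal HK)); apply: subset_leq_card.
  by apply/subsetP => j; rewrite !inE => /andP[].
have hZF : Z < F.
  have [j1 [k1 Pjk1]] := C2 (Ordinal HS).
  rewrite -(C1 k1); apply: (@leq_trans #|[set: 'I_F]|); last by rewrite cardsT card_ord.
  apply: proper_card; apply/properP; split; first exact: subsetT.
  by exists j1; rewrite ?inE ?Pjk1.
have j0 : 'I_F := Ordinal HF.
pose n0 : 'I_N := Ordinal HN.
pose cache k (W : files 'F_p N (F - Z')) (i : 'I_(N * m)) :=
  ev a (nth j0 (enum (U k)) (i %% m)) (W (insubd n0 (i %/ m))).
pose deliver (d : 'I_K -> 'I_N) (W : files 'F_p N (F - Z')) (s : 'I_S) :=
  (\sum_(jk : 'I_F * 'I_K | P jk.1 jk.2 == Some s) ev a jk.1 (W (d jk.2)))%R.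
have cacheE1 : forall k W W', cache k W = cache k W' ->
    forall nn j', j' \in U k -> ev a j' (W nn) = ev a j' (W' nn).
  move=> k W W' e nn j' jU.
  have tm : index j' (enum (U k)) < m by rewrite -(hU k) cardE index_mem mem_enum.
  have im : nn * m + index j' (enum (U k)) < N * m.
    apply: (@leq_trans (nn * m + m)); first by rewrite ltn_add2l.
    by rewrite addnC -mulSn leq_mul2r ltn_ord orbT.
  have := congr1 (fun f => f (Ordinal im)) e; rewrite /cache /=.
  have m0 : 0 < m by apply: leq_ltn_trans tm.
  rewrite modnMDl modn_small // divnMDl // divn_small // addn0 valKd.
  by rewrite nth_index // mem_enum.
have cacheE2 : forall k W W',
    (forall nn j', j' \in U k -> ev a j' (W nn) = ev a j' (W' nn)) -> cache k W = cache k W'.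
  move=> k W W' H; apply: functional_extensionality => i; rewrite /cache; apply: H.
  have : 0 < N * m := leq_ltn_trans (leq0n i) (ltn_ord i).
  rewrite muln_gt0 => /andP[_ m0].
  by rewrite -mem_enum mem_nth // -cardE hU ltn_pmod.
have dec : forall d k j s W W', P j k = Some s -> cache k W = cache k W' ->
    deliver d W s = deliver d W' s -> ev a j (W (d k)) = ev a j (W' (d k)).
  move=> d k j s W W' Pjk ec; rewrite /deliver (bigD1 (j, k)) /=; last by rewrite Pjk.
  rewrite [X in _ = X -> _](bigD1 (j, k)) /=; last by rewrite Pjk.
  set X1 := (\sum_(jk | _) _)%R; set X2 := (\sum_(jk | _) _)%R.
  have -> : X1 = X2.
    apply: eq_bigr => -[j2 k2] /= /andP[/eqP P2 ne].
    have ne2 : (j, k) != (j2, k2) by rewrite eq_sym.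
    have [_ _ h1 h2] := C3 j j2 k k2 s ne2 Pjk P2.
    apply: (cacheE1 _ _ _ ec); rewrite inE /useful_star h2 eqxx /=.
    apply/existsP; exists s; apply/existsP; exists k2; apply/existsP; exists j.
    by rewrite P2 Pjk !eqxx.
  by move/addIr.
exists ('F_p : finFieldType), (N * m), cache, deliver, (ev a).
split.
- move=> d k.
  have Hf : forall W W', (cache k W, deliver d W) = (cache k W', deliver d W') ->
      forall i, W (d k) i = W' (d k) i.
    move=> W W' [ec ed] i.
    apply: (ev_inj ainj (hR k)) => j; rewrite inE /useless_star negb_and negbK.
    case E: (P j k) => [s|] /=.
      by move=> _; apply: (dec d k j s) => //; rewrite ed.
    move=> uj; apply: (cacheE1 _ _ _ ec); rewrite inE; by move: uj.
  have [h Hh] := @factor_ex _ _ _ _ (0 : 'F_p)%R (fun W => (cache k W, deliver d W))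
     (fun W => W (d k)) Hf.
  by exists (fun cw dw => h (cw, dw)).
- rewrite /memory_ratio natrM mulrAC (mulrC (N%:R)%R) mulfK //.
  by rewrite pnatr_eq0 -lt0n.
- by [].
- by [].
- move=> d j k s Pjk; split.
    have Hf : forall W W', (cache k W, deliver d W s) = (cache k W', deliver d W' s) ->
        forall i : unit, ev a j (W (d k)) = ev a j (W' (d k)).
      by move=> W W' [ec ed] _; apply: (dec d k j s).
    have [h Hh] := @factor_ex _ _ _ unit (0 : 'F_p)%R
       (fun W => (cache k W, deliver d W s)) (fun W _ => ev a j (W (d k))) Hf.
    by exists (fun cw x => h (cw, x) tt).
  case=> h Hh.
  have jU : j \notin U k by rewrite inE /useful_star Pjk.
  have cU : #|U k| < F - Z' by rewrite hU /m ltn_sub2r // (leq_ltn_trans hZZ').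
  have [w [w0 wj]] := ev_sep ainj jU cU.
  pose W0 : files 'F_p N (F - Z') := fun _ _ => 0%R.
  pose W1 : files 'F_p N (F - Z') := fun nn i => if nn == d k then w i else 0%R.
  have ev0 : forall j', ev a j' (fun _ : 'I_(F - Z') => 0%R : 'F_p) = 0%R.
    by move=> j'; rewrite /ev big1 // => i _; rewrite mul0r.
  have ec : cache k W0 = cache k W1.
    apply: cacheE2 => nn j' jU'; rewrite /W1 /W0; case: eqP => _; last by [].
    by rewrite w0 // ev0.
  have := Hh W0; rewrite ec Hh /W1 /W0 eqxx ev0 => e.
  by move: wj; rewrite e eqxx.
Qed.
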